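(* Let $k$ be a field, $A$ a $k$-algebra, $a_1,\ldots,a_m\in A$, $d\ge1$, and $M_{d,m}=\binom{d+m-1}{m}$. If $P_{\le M_{d,m}}(a_1,\ldots,a_m)\subseteq P_{\le d-1}(a_1,\ldots,a_m)$, then every element of the subspace $ka_1+\cdots+ka_m$ is algebraic over $k$ of degree at most $M_{d,m}$.
   Context: Algebras are associative with unit. For nonnegative integers $i_1,\ldots,i_m$, $p_{i_1,\ldots,i_m}(x_1,\ldots,x_m)$ is the sum of all distinct noncommutative monomials with exactly $i_j$ occurrences of $x_j$ for each $j$ ($p_{0,\ldots,0}=1$); $p_{i_1,\ldots,i_m}(a_1,\ldots,a_m)$ is its evaluation at $x_j=a_j$. $P_n(a_1,\ldots,a_m)=\operatorname{span}_k\{p_{i_1,\ldots,i_m}(a_1,\ldots,a_m)\mid i_1+\cdots+i_m=n\}$ and $P_{\le r}(a_1,\ldots,a_m)=\sum_{n=0}^rP_n(a_1,\ldots,a_m)$. Algebraic of degree at most $D$ means a root of a nonzero polynomial in $k[t]$ of degree at most $D$. *)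

(* Defs.v *)
From mathcomp Require Import all_boot all_algebra.
Set Implicit Arguments. Unset Strict Implicit. Unset Printing Implicit Defensive.
Import GRing.Theory.
Local Open Scope ring_scope.

Definition pword (k : fieldType) (A : algType k) (m : nat)
    (a : 'I_m -> A) (i : 'I_m -> nat) : A :=
  \sum_(w : (\sum_(j < m) i j)%N .-tuple 'I_m
          | [forall j : 'I_m, count_mem j w == i j])
     \prod_(l <- w) a l.

(* Exponent vectors with |i| <= r
   have all entries <= r, so they are enumerated by {ffun 'I_m -> 'I_r.+1}. *)
Definition in_P_le (k : fieldType) (A : algType k) (m : nat)
    (a : 'I_m -> A) (r : nat) (x : A) : Prop :=
  exists c : {ffun 'I_m -> 'I_r.+1} -> k,
    x = \sum_(i : {ffun 'I_m -> 'I_r.+1} | (\sum_(j < m) (i j : nat) <= r)%N)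
          c i *: pword a (fun j => (i j : nat)).

Definition Mdm (d m : nat) : nat := 'C(d + m - 1, m).

Definition algebraic_le (k : fieldType) (A : algType k) (D : nat) (x : A) : Prop :=
  exists q : {poly k}, q != 0 /\ (size q <= D.+1)%N /\ horner_alg x q = 0.

(* Main.v *)
Require Import Defs.
From mathcomp Require Import all_boot all_algebra.
Set Implicit Arguments. Unset Strict Implicit. Unset Printing Implicit Defensive.
From mathcomp Require Import zify.
Import GRing.Theory.
Local Open Scope ring_scope.

Lemma sum_count (m : nat) (s : seq 'I_m) : (\sum_(j < m) count_mem j s)%N = size s.
Proof.
elim: s => [|x s IH] /=; first by rewrite big1.
rewrite big_split /= IH (bigD1 x) //= eqxx big1 ?addn0 // => j /negbTE.
by rewrite eq_sym => ->.
Qed.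

Lemma prod_count (R : comNzRingType) m (c : 'I_m -> R) (s : seq 'I_m) :
  \prod_(l <- s) c l = \prod_(j < m) c j ^+ count_mem j s.
Proof.
elim: s => [|x s IH]; first by rewrite big_nil big1 // => j _; rewrite expr0.
rewrite big_cons IH /= [RHS](eq_bigr (fun j => c j ^+ (x == j) * c j ^+ count_mem j s)) => [|j _]; last by rewrite exprD.
rewrite big_split /= [X in _ = X * _](bigD1 x) //= eqxx expr1 (big1 _ (fun i => i != x)) ?mulr1 // => j /negbTE.
by rewrite eq_sym => ->; rewrite expr0.
Qed.

Lemma pow_expand (k : fieldType) (A : algType k) m (a : 'I_m -> A) (c : 'I_m -> k) n :
 (\sum_(j < m) c j *: a j) ^+ n =
   \sum_(w : n.-tuple 'I_m) (\prod_(l <- w) c l) *: \prod_(l <- w) a l.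
Proof.
rewrite -[n in LHS]card_ord -prodr_const bigA_distr_bigA /=.
rewrite [RHS](reindex (@tuple_of_finfun _ n)) /=; last first.
  by exists (@finfun_of_tuple _ n) => t _; [apply: tuple_of_finfunK|apply: finfun_of_tupleK].
apply: eq_bigr => f _; rewrite -scaler_prod big_map; apply: congr_big => //; by rewrite enumT /index_enum unlock.
Qed.

Lemma tuple_sum_transport (T : finType) (V : nmodType) n1 n2 (P : pred (seq T))
  (F : seq T -> V) : n1 = n2 ->
  \sum_(w : n1.-tuple T | P w) F w = \sum_(w : n2.-tuple T | P w) F w.
Proof. by move=> ->. Qed.

Lemma pow_in_P (k : fieldType) (A : algType k) m (a : 'I_m -> A) (c : 'I_m -> k) n R :
  (n <= R)%N -> in_P_le a R ((\sum_(j < m) c j *: a j) ^+ n).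
Proof.
move=> nR; rewrite pow_expand.
exists (fun i : {ffun 'I_m -> 'I_R.+1} =>
  if (\sum_(j < m) (i j : nat) == n)%N then \prod_(j < m) c j ^+ i j else 0).
have cntE (w : n.-tuple 'I_m) j : ((inord (count_mem j w) : 'I_R.+1) : nat) = count_mem j w.
  by rewrite inordK // ltnS (leq_trans _ nR) // -[X in (_ <= X)%N](size_tuple w) count_size.
rewrite (partition_big (fun w : n.-tuple 'I_m => [ffun j => (inord (count_mem j w) : 'I_R.+1)])
   (fun i : {ffun 'I_m -> 'I_R.+1} => (\sum_(j < m) (i j : nat) <= R)%N)) /=; last first.
  move=> w _; rewrite (eq_bigr (fun j => count_mem j w)) => [|j _]; last by rewrite ffunE cntE.
  by rewrite sum_count size_tuple.
apply: eq_bigr => i _.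
have cntP (w : n.-tuple 'I_m) : ([ffun j => (inord (count_mem j w) : 'I_R.+1)] == i) =
    [forall j, count_mem j w == i j].
  apply/eqP/forallP => [<- j|H]; first by rewrite ffunE cntE.
  by apply/ffunP => j; apply/val_inj; rewrite ffunE /= cntE (eqP (H j)).
case: eqP => Hs; last first.
  rewrite scale0r big_pred0 // => w; rewrite cntP; apply/negP => /forallP H; apply: Hs.
  by rewrite -(size_tuple w) -sum_count; apply: eq_bigr => j _; rewrite (eqP (H j)).
rewrite /pword (@tuple_sum_transport _ _ _ _ (fun s => [forall j, count_mem j s == i j])
  (fun s => \prod_(l <- s) a l) Hs) scaler_sumr.
apply: eq_big => w; first by rewrite cntP.
by rewrite /= cntP => /forallP H; rewrite prod_count; congr (_ *: _); apply: eq_bigr => j _; rewrite (eqP (H j)).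
Qed.

Local Open Scope nat_scope.
Lemma card_S m d' :
  (#|[pred i : {ffun 'I_m -> 'I_d'.+1} | \sum_(j < m) (i j : nat) <= d']| <= 'C(m + d', m))%N.
Proof.
pose g (i : {ffun 'I_m -> 'I_d'.+1}) (j : nat) := \sum_(l < m) ((l <= j) * i l).
pose h (i : {ffun 'I_m -> 'I_d'.+1}) (j : nat) := \sum_(l < m) ((l < j) * i l).
have gle (i : {ffun 'I_m -> 'I_d'.+1}) (j : nat) : \sum_(l < m) (i l : nat) <= d' -> g i j <= d'.
  move=> H; apply: leq_trans H; apply: leq_sum => l _.
  by case: (l <= j); rewrite ?mul1n ?mul0n.
have gh (i : {ffun 'I_m -> 'I_d'.+1}) (j : 'I_m) : g i j = h i j + i j.
  rewrite /g /h (bigD1 j) //= leqnn mul1n [X in _ = X + _](bigD1 j) //= ltnn mul0n add0n addnC.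
  congr (_ + _); apply: eq_bigr => l Hl.
  have Hn : (nat_of_ord l != nat_of_ord j) by [].
  by case: (ltngtP l j) Hn => H; rewrite ?eqxx // => _; rewrite ?(ltnW H) ?H // leqNgt H.
have h0 (i : {ffun 'I_m -> 'I_d'.+1}) : h i 0 = 0 by rewrite /h big1.
have hS (i : {ffun 'I_m -> 'I_d'.+1}) j : h i j.+1 = g i j by [].
pose ps i : m.-tuple 'I_d'.+1 := [tuple (inord (g i j) : 'I_d'.+1) | j < m].
rewrite -card_sorted_tuples.
rewrite -(@card_in_imset _ _ ps); last first.
  move=> i1 i2 H1 H2 E.
  have Eg (j : 'I_m) : g i1 j = g i2 j.
    have := congr1 (fun t => val (tnth t j)) E.
    by rewrite /ps /= !tnth_map !tnth_ord_tuple /= !inordK // ltnS gle.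
  have Eh (j : 'I_m) : h i1 j = h i2 j.
    case: j => [[|j]] Hj; first by rewrite !h0.
    by rewrite !hS (Eg (Ordinal (ltnW Hj))).
  apply/ffunP => j; apply/val_inj => /=.
  by have := Eg j; rewrite !gh Eh => /addnI.
apply: subset_leq_card; apply/subsetP => t /imsetP [i Hi ->].
rewrite inE.
have -> : map val (ps i) = map (g i) (iota 0 m).
  rewrite /= -map_comp -val_enum_ord -map_comp; apply: eq_map => j /=.
  by rewrite inordK // ltnS gle.
apply: (homo_sorted (e := leq)); last by apply: iota_sorted.
move=> j1 j2 Hj; apply: leq_sum => l _; apply: leq_mul => //.
by case E: (l <= j1) => //=; rewrite (leq_trans E Hj).
Qed.
Local Open Scope ring_scope.

Theorem lemma3p5 (k : fieldType) (A : algType k) (m : nat) (a : 'I_m -> A)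
    (d : nat) (hd : (1 <= d)%N) :
  (forall x : A, in_P_le a (Mdm d m) x -> in_P_le a d.-1 x) ->
  forall c : 'I_m -> k, algebraic_le (Mdm d m) (\sum_(j < m) c j *: a j).
Proof.
move: hd; case: d => [//|d'] _ Hyp c.
set M := Mdm d'.+1 m.
set x := \sum_(j < m) c j *: a j.
pose S := [pred i : {ffun 'I_m -> 'I_d'.+1} | (\sum_(j < m) (i j : nat) <= d')%N].
have Hex : forall n : 'I_M.+1, exists e : {ffun 'I_m -> 'I_d'.+1} -> k,
    x ^+ n = \sum_(i in S) e i *: pword a (fun j => (i j : nat)).
  move=> n; exact: (Hyp _ (pow_in_P a c (ltnSE (ltn_ord n)))).
have [e He] := fin_all_exists Hex.
have NM : (#|S| <= M)%N.
  rewrite /M /Mdm addSn subn1 /= addnC; exact: card_S.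
pose C : 'M[k]_(M.+1, #|S|) := \matrix_(n, j) e n (enum_val j).
have Knz : kermx C != 0.
  rewrite -mxrank_eq0 mxrank_ker subn_eq0 -ltnNge ltnS.
  exact: leq_trans (rank_leq_col C) NM.
have [r Hr] : exists r, row r (kermx C) != 0.
  case: (pickP (fun r => row r (kermx C) != 0)) => [r Hr|H]; first by exists r.
  case/negP: Knz; apply/eqP/row_matrixP => r; rewrite row0; apply/eqP; have := H r; rewrite /= => /negbT; by rewrite negbK.
pose u := row r (kermx C).
have uC : u *m C = 0 by rewrite /u -row_mul mulmx_ker row0.
exists (\poly_(n < M.+1) u 0 (inord n)); split; [|split].
- apply/negP => /eqP q0; case/negP: Hr; apply/eqP/rowP => n.
  have := congr1 (fun p : {poly k} => p`_n) q0.
  by rewrite coef_poly ltn_ord inord_val coef0 !mxE; apply.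
- exact: size_poly.
rewrite poly_def raddf_sum /=.
under eq_bigr => n _ do rewrite inord_val linearZ /= rmorphXn mulr_algl [X in _ *: X ^+ _](horner_algX x) He (big_enum_val (A := S)) scaler_sumr.
rewrite exchange_big /=; apply: big1 => j _.
under eq_bigr => n _ do rewrite scalerA.
rewrite -scaler_suml.
have -> : \sum_(i < M.+1) u 0 i * e i (enum_val j) = (u *m C) 0 j.
  by rewrite !mxE; apply: eq_bigr => n _; congr (_ * _); rewrite /C mxE.
by rewrite uC mxE scale0r.
Qed.
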